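(* Assume $f$ has a unique global maximizer $g$ and the problem contains no weak epistasis. Let $v_0,v_1,\dots,v_{\ell-1}$ be an enumeration of $V$ in topological order of the epistatic graph, i.e. $\{v_j\}\not\Rightarrow v_i$ whenever $i<j$ (so the epistatic graph is acyclic). Then Partial Enumeration run on the partition $D=(\{v_0\},\{v_1\},\dots,\{v_{\ell-1}\})$, from any initial chromosome, ends with allele $g[v_i]$ at locus $v_i$ for every $i$; i.e. it returns the global optimum, using $2\ell$ fitness evaluations.
   Context: Fix $\ell\ge1$, loci $V=\{0,\dots,\ell-1\}$, chromosomes $\vec y\in\{0,1\}^V$, fitness $f:\{0,1\}^V\to\mathbb R$ (maximized) with unique global maximizer $g$. An assignment $A$ is a set of pairs $(v,a)$ ($v\in V$, $a\in\{0,1\}$) with at most one pair per locus; coverage $\mathcal C(A)$ is the set of loci in $A$; $\vec y^A$ denotes $\vec y$ with the alleles at loci of $\mathcal C(A)$ overwritten by $A$. $\Psi_A$ (constrained optima) is the set of chromosomes agreeing with $A$ on $\mathcal C(A)$ with maximum fitness among such chromosomes; $\Psi_A[v]=\{\psi_v:\psi\in\Psi_A\}$. Epistasis: for $v\in V$ and nonempty $S\subseteq V\setminus\{v\}$, $S\Rightarrow v$ iff for every $s\in S$ there exists an assignment $A$ with $\mathcal C(A)=S$ and $\Psi_A[v]\neq\Psi_{A\setminus\{(s,A[s])\}}[v]$ (where $A[s]$ is the allele of $A$ at $s$); the empty set is never epistatic. An epistasis $S\Rightarrow v$ with $|S|\ge2$ is weak if no nonempty proper subset $T\subsetneq S$ has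 $T\Rightarrow v$; ''no weak epistasis'' means no epistasis is weak. The epistatic graph is the directed graph on $V$ with edge $u\to v$ iff $\{u\}\Rightarrow v$. Partial Enumeration (PE) takes an ordered partition $D=(d_0,\dots,d_{m-1})$ of $V$, starts from an arbitrary (random) chromosome $\vec y$, and for $i=0,\dots,m-1$ in turn, for each of the $2^{|d_i|}$ assignments $A$ with $\mathcal C(A)=d_i$ (in any order), replaces $\vec y$ by $\vec y^A$ whenever $f(\vec y^A)>f(\vec y)$; it returns the final $\vec y$. *)

(* Defs.v *)
From mathcomp Require Import all_boot all_order all_algebra.
From mathcomp Require Import perm.
Set Implicit Arguments. Unset Strict Implicit. Unset Printing Implicit Defensive.
Import Order.TTheory GRing.Theory Num.Theory.
Local Open Scope ring_scope.

(* Loci V = 'I_l ; chromosomes y : V -> {0,1} (false = 0, true = 1). *)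
Definition chrom (l : nat) := {ffun 'I_l -> bool}.

(* An assignment: at most one allele per locus, i.e. a partial map V -> {0,1}. *)
Definition assign (l : nat) := {ffun 'I_l -> option bool}.

Section Defs.
Variables (R : realFieldType) (l : nat).
Implicit Types (f : chrom l -> R) (y g : chrom l) (A : assign l)
  (S T : {set 'I_l}) (v : 'I_l).

Definition coverage A : {set 'I_l} := [set v | A v != None].

Definition overwrite y A : chrom l :=
  [ffun v => if A v is Some a then a else y v].

Definition agrees A y : bool := [forall v, if A v is Some a then y v == a else true].

Definition Psi f A : {set chrom l} :=
  [set y | agrees A y && [forall z : chrom l, agrees A z ==> (f z <= f y)]].

Definition Psi_at f A v : {set bool} := [set (y : chrom l) v | y in Psi f A].

Definition remove_at A (s : 'I_l) : assign l :=
  [ffun v => if v == s then None else A v].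

Definition epistatic f S v : Prop :=
  S != set0 /\ v \notin S /\
  forall s, s \in S ->
    exists A : assign l, coverage A = S /\ Psi_at f A v != Psi_at f (remove_at A s) v.

Definition weak_epistasis f S v : Prop :=
  (2 <= #|S|)%N /\ epistatic f S v /\
  ~ (exists T, [/\ T != set0, T \proper S & epistatic f T v]).

Definition no_weak_epistasis f : Prop :=
  forall S v, ~ weak_epistasis f S v.

Definition unique_global_max f g : Prop :=
  forall y, y != g -> f y < f g.

Definition assigns_on (d : {set 'I_l}) : seq (assign l) :=
  [seq A <- enum {: assign l} | coverage A == d].

Definition pe_block f y (As : seq (assign l)) : chrom l :=
  foldl (fun y A => if f y < f (overwrite y A) then overwrite y A else y) y As.

(* Partial Enumeration: orders is the list of assignment orderings, one per block *)
Definition PE f (y0 : chrom l) (orders : seq (seq (assign l))) : chrom l :=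
  foldl (pe_block f) y0 orders.

(* orders is a valid choice of enumeration orders for the ordered partition D:
   for each block d_i, the i-th list enumerates each of the 2^|d_i| assignments
   with coverage d_i exactly once ("in any order") *)
Definition valid_orders (D : seq {set 'I_l}) (orders : seq (seq (assign l))) : bool :=
  all2 (fun As d => perm_eq As (assigns_on d)) orders D.

End Defs.

(* the partition ({v_0}, ..., {v_{l-1}}) for the enumeration i |-> sigma i *)
Definition singleton_partition (l : nat) (sigma : {perm 'I_l}) : seq {set 'I_l} :=
  [seq [set sigma i] | i <- enum 'I_l].

(* Main.v *)
Require Import Defs.
From mathcomp Require Import all_boot all_order all_algebra.
From mathcomp Require Import perm.
From Stdlib Require Import Classical.
Set Implicit Arguments. Unset Strict Implicit. Unset Printing Implicit Defensive.
Import Order.TTheory GRing.Theory Num.Theory.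
Local Open Scope ring_scope.

Lemma step_gen (R : realFieldType) (T : Type) (h : bool -> T) (F : T -> R) (b0 c d : bool) :
  F (h (~~ b0)) < F (h b0) ->
  (if F (h c) < F (h d) then h d else h c) = h (if d == b0 then d else c).
Proof. by case: b0; case: c; case: d => //= H; rewrite ?ltxx ?H ?(lt_gtF H). Qed.

Lemma perm2 (T : eqType) (s : seq T) a b : a != b -> perm_eq s [:: a; b] ->
  s = [:: a; b] \/ s = [:: b; a].
Proof.
move=> ab P.
have := perm_size P; case: s P => [|x [|y [|z s]]] //= P _.
have Hu : uniq [:: x; y] by rewrite (perm_uniq P) /= inE ab.
have Hx : x \in [:: a; b] by rewrite -(perm_mem P) inE eqxx.
have Hy : y \in [:: a; b] by rewrite -(perm_mem P) !inE eqxx orbT.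
move: Hu Hx Hy; rewrite /= !inE andbT.
move=> Hxy /orP[/eqP Ex|/eqP Ex] /orP[/eqP Ey|/eqP Ey]; subst;
  rewrite ?eqxx in Hxy; by auto.
Qed.

Section S.
Variables (R : realFieldType) (l : nat) (f : chrom l -> R) (g : chrom l).
Variable sigma : {perm 'I_l}.
Hypothesis Hmax : unique_global_max f g.
Hypothesis Hnw : no_weak_epistasis f.
Hypothesis Htop : forall i j : 'I_l, (i < j)%N -> ~ epistatic f [set sigma j] (sigma i).

Definition mk (u : 'I_l) (a : bool) : assign l := [ffun v => if v == u then Some a else None].
Definition later (i : 'I_l) : {set 'I_l} := [set v | (i < (sigma^-1)%g v)%N].

Lemma Psi_empty (B : assign l) : coverage B = set0 -> Psi f B = [set g].
Proof.
move=> HB.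
have HN v : B v = None.
  apply/eqP; apply: contraT => H.
  have : v \in coverage B by rewrite /coverage inE.
  by rewrite HB inE.
have Hag z : agrees B z by apply/forallP => v; rewrite HN.
apply/setP => y; rewrite /Psi !inE Hag /=.
case: (eqVneq y g) => [->|ne].
- apply/forallP => z; apply/implyP => _.
  case: (eqVneq z g) => [->//|nz]; exact: ltW (Hmax nz).
- apply/negbTE; apply/negP => /forallP /(_ g) /implyP /(_ (Hag g)).
  by rewrite leNgt (Hmax ne).
Qed.

Lemma cov_remove (B : assign l) (s : 'I_l) : coverage (remove_at B s) = coverage B :\ s.
Proof. by apply/setP => v; rewrite /coverage !inE ffunE; case: (v == s). Qed.

Lemma in_Psi_at (B : assign l) (z : chrom l) (v : 'I_l) : z \in Psi f B -> z v \in Psi_at f B v.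
Proof. by move=> H; apply/imsetP; exists z. Qed.

Lemma reduce n (S : {set 'I_l}) (v : 'I_l) : (#|S| <= n)%N -> epistatic f S v ->
  exists u, u \in S /\ epistatic f [set u] v.
Proof.
elim: n S => [|n IH] S.
  rewrite leqn0 cards_eq0 => /eqP -> [H _]; by rewrite eqxx in H.
move=> HS He; case: (leqP #|S| 1) => H1.
  have : #|S| = 1%N.
    apply/eqP; rewrite eqn_leq H1 card_gt0; by case: He.
  move/eqP/cards1P => [u Su]; subst S; exists u; split => //; by rewrite set11.
have [T [T0 TS HT]] : exists T, [/\ T != set0, T \proper S & epistatic f T v].
  apply: NNPP => Hn; apply: (Hnw (S:=S) (v:=v)); split => //.
have HTn : (#|T| <= n)%N by rewrite -ltnS; apply: leq_trans (proper_card TS) HS.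
have [u [uT Hu]] := IH T HTn HT.
exists u; split => //; exact: (subsetP (proper_sub TS)).
Qed.

Lemma key (i : 'I_l) : forall n (B : assign l), (#|coverage B| <= n)%N ->
  coverage B \subset later i -> Psi_at f B (sigma i) = [set g (sigma i)].
Proof.
elim=> [|n IH] B Hn Hsub.
  have : coverage B = set0 by apply/eqP; rewrite -cards_eq0 -leqn0.
  by move/Psi_empty => HP; rewrite /Psi_at HP imset_set1.
case: (eqVneq (Psi_at f B (sigma i)) [set g (sigma i)]) => // Hne.
exfalso.
case: (eqVneq (coverage B) set0) => [H0|Hn0].
  by rewrite /Psi_at (Psi_empty H0) imset_set1 eqxx in Hne.
have He : epistatic f (coverage B) (sigma i).
  split => //; split.
    by apply/negP => /(subsetP Hsub); rewrite inE permK ltnn.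
  move=> s Hs; exists B; split => //.
  rewrite (IH (remove_at B s)) //.
    rewrite cov_remove; move: Hn; rewrite (cardsD1 s) Hs add1n ltnS //.
  rewrite cov_remove; apply: subset_trans Hsub; exact: subsetDl.
have [u [Hu Heu]] := reduce (leqnn _) He.
have := subsetP Hsub u Hu; rewrite inE => Hlt.
apply: (Htop Hlt); by rewrite permKV.
Qed.

Definition upd (y : chrom l) u a := overwrite y (mk u a).

Lemma pe_key (i : 'I_l) (y : chrom l) :
  (forall j : 'I_l, (j < i)%N -> y (sigma j) = g (sigma j)) ->
  f (upd y (sigma i) (~~ g (sigma i))) < f (upd y (sigma i) (g (sigma i))).
Proof.
move=> Hinv; set u := sigma i.
pose B : assign l := [ffun v => if v \in later i then Some (y v) else None].
have HcB : coverage B \subset later i.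
  by apply/subsetP => v; rewrite /coverage inE ffunE; case: (v \in later i).
have HPu := key (leqnn _) HcB.
have HPj (j : 'I_l) : (j < i)%N -> Psi_at f B (sigma j) = [set g (sigma j)].
  move=> Hji; apply: (key (leqnn _)); apply: subset_trans HcB _.
  apply/subsetP => v; rewrite !inE => H; exact: ltn_trans Hji H.
have : g u \in Psi_at f B u by rewrite /u HPu set11.
case/imsetP => z Hz _.
move: (Hz); rewrite inE => /andP [Hag Hmaxz].
have Hzw : z = upd y u (g u).
  apply/ffunP => v; rewrite !ffunE.
  have Hv : v = sigma ((sigma^-1)%g v) by rewrite permKV.
  case: (ltngtP i ((sigma^-1)%g v)) => Hik.
  - have Hvl : v \in later i by rewrite inE.
    have := forallP Hag v; rewrite ffunE Hvl => /eqP ->.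
    case: eqP => // Evu; move: Hik; by rewrite Evu /u permK ltnn.
  - have HPk := HPj _ Hik; rewrite -Hv in HPk.
    have := in_Psi_at v Hz; rewrite HPk inE => /eqP ->.
    case: eqP => [Evu|_]; first by move: Hik; rewrite Evu /u permK ltnn.
    by rewrite Hv Hinv // -Hv.
  - have Evu : v = u by rewrite Hv /u; congr (sigma _); apply: val_inj.
    have := in_Psi_at v Hz; rewrite Evu HPu inE => /eqP ->.
    by rewrite eqxx.
pose w' := upd y u (~~ g u).
have Hag' : agrees B w'.
  apply/forallP => v; rewrite !ffunE; case: ifP => // Hv.
  have Hvu : (v == u) = false.
    apply/eqP => Evu; move: Hv; by rewrite Evu inE /u permK ltnn.
  by rewrite Hvu.
have Hle : f w' <= f z := implyP (forallP Hmaxz w') Hag'.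
rewrite -Hzw lt_def Hle andbT.
apply/eqP => Heq.
have Hw' : w' \in Psi f B.
  rewrite inE Hag' /=; apply/forallP => x; apply/implyP => Hx.
  rewrite -Heq; exact: (implyP (forallP Hmaxz x) Hx).
have := in_Psi_at u Hw'; rewrite HPu inE /w' ffunE ffunE eqxx.
by case: (g u).
Qed.

Lemma mk_inj u : injective (mk u).
Proof. by move=> a b /ffunP /(_ u); rewrite !ffunE eqxx => -[]. Qed.

Lemma assigns_single u :
  perm_eq (assigns_on [set u]) [:: mk u true; mk u false].
Proof.
apply: uniq_perm.
- by rewrite /assigns_on filter_uniq // enum_uniq.
- by rewrite /= inE andbT; apply/negP => /eqP /mk_inj.
move=> A; rewrite /assigns_on mem_filter mem_enum andbT !inE.
apply/eqP/idP => [HA|].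
  have HAv v : A v != None = (v == u).
    by have := f_equal (fun S : {set 'I_l} => v \in S) HA; rewrite /coverage !inE.
  have := HAv u; rewrite eqxx; case Au : (A u) => [a|] // _.
  have -> : A = mk u a.
    apply/ffunP => v; rewrite ffunE; case: (eqVneq v u) => [->//|vu].
    by have := HAv v; rewrite (negbTE vu); case: (A v).
  by clear Au; case: a; rewrite eqxx ?orbT.
case/orP => /eqP ->; apply/setP => v; rewrite /coverage !inE ffunE;
  by case: (v == u).
Qed.

Lemma upd_upd (y : chrom l) u a b : upd (upd y u a) u b = upd y u b.
Proof. by apply/ffunP => v; rewrite !ffunE; case: (v == u). Qed.

Lemma upd_self (y : chrom l) u : upd y u (y u) = y.
Proof. by apply/ffunP => v; rewrite !ffunE; case: eqVneq => [->|]. Qed.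

Lemma block (i : 'I_l) (y : chrom l) (As : seq (assign l)) :
  perm_eq As (assigns_on [set sigma i]) ->
  (forall j : 'I_l, (j < i)%N -> y (sigma j) = g (sigma j)) ->
  pe_block f y As = upd y (sigma i) (g (sigma i)).
Proof.
move=> HP Hinv; set u := sigma i.
have Hlt := pe_key Hinv.
have HP2 : perm_eq As [:: mk u true; mk u false].
  exact: perm_trans HP (assigns_single u).
have Hne : mk u true != mk u false by apply/negP => /eqP /mk_inj.
have Hlt' : f (upd y u (~~ g u)) < f (upd y u (g u)) by [].
have -> : pe_block f y As = pe_block f (upd y u (y u)) As by rewrite upd_self.
have E a b : pe_block f (upd y u (y u)) [:: mk u a; mk u b] =
    upd y u (if b == g u then b else if a == g u then a else y u).
  rewrite /pe_block /= -/(upd _ u a) -/(upd _ u b).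
  rewrite upd_upd (@step_gen _ _ (upd y u) f (g u) _ _ Hlt').
  by rewrite upd_upd (@step_gen _ _ (upd y u) f (g u) _ _ Hlt').
case: (perm2 Hne HP2) => ->; rewrite E; by case: (g u).
Qed.

Lemma loop : forall (orders : seq (seq (assign l))) (idx : seq 'I_l) k (y : chrom l),
  all2 (fun As d => perm_eq As (assigns_on d)) orders [seq [set sigma i] | i <- idx] ->
  map val idx = iota k (size idx) ->
  (forall j : 'I_l, (j < k)%N -> y (sigma j) = g (sigma j)) ->
  forall j : 'I_l, (j < k + size idx)%N ->
    foldl (pe_block f) y orders (sigma j) = g (sigma j).
Proof.
elim=> [|As os IH] [|i idx] k y //=.
  by move=> _ _ H j; rewrite addn0; exact: H.
move=> /andP [HP Hall] [Hi Hidx] Hinv j Hj.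
apply: (IH idx k.+1) => //; last by rewrite addSnnS.
move=> j' Hj'.
rewrite (block HP); last by move=> j0; rewrite Hi; exact: Hinv.
rewrite !ffunE; case: eqP => [E|NE] /=.
  by rewrite E.
apply: Hinv; move: Hj'; rewrite ltnS leq_eqVlt => /orP [/eqP E|//].
by exfalso; apply: NE; congr (sigma _); apply: val_inj; rewrite /= E Hi.
Qed.

Lemma count_sz : forall (orders : seq (seq (assign l))) (idx : seq 'I_l),
  all2 (fun As d => perm_eq As (assigns_on d)) orders [seq [set sigma i] | i <- idx] ->
  sumn [seq size As | As <- orders] = (2 * size idx)%N.
Proof.
elim=> [|As os IH] [|i idx] //=.
move=> /andP [HP Hall]; rewrite (IH _ Hall) (perm_size HP) (perm_size (assigns_single _)) /=.
by rewrite mulnS.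
Qed.

End S.

Unset Implicit Arguments.
Theorem theorem2 (R : realFieldType) (l : nat) (f : chrom l -> R) (g : chrom l) :
  (0 < l)%N ->
  unique_global_max f g ->
  no_weak_epistasis f ->
  forall sigma : {perm 'I_l},
    (forall i j : 'I_l, (i < j)%N -> ~ epistatic f [set sigma j] (sigma i)) ->
  forall (y0 : chrom l) (orders : seq (seq (assign l))),
    valid_orders (singleton_partition sigma) orders ->
    (forall i : 'I_l, PE f y0 orders (sigma i) = g (sigma i)) /\
    sumn [seq size As | As <- orders] = (2 * l)%N.
Proof.
move=> _ Hmax Hnw sigma Htop y0 orders Hv; split.
  move=> i; apply: (loop Hmax Hnw Htop (idx := enum 'I_l) (k := 0)) => //.
  - by rewrite val_enum_ord size_enum_ord.
  - by rewrite add0n size_enum_ord.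
by rewrite (count_sz Hv) size_enum_ord.
Qed.
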